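(* There is an absolute constant $K>0$ such that the following holds. Let $n\ge 1$, $k=\lfloor\sqrt n\rfloor$, and let $M_n$ be the $\binom{n}{k}\times n$ matrix whose rows are all the distinct $0/1$ vectors of length $n$ with exactly $k$ ones. Consider a bimatrix game in which the row player's payoff matrix is $M_n$ (the column player's payoff matrix is arbitrary). Then for every mixed strategy $\mathbf{x}$ of the row player there exists a column $m$ of $M_n$ such that, for every $p\in[0,1]$ and every mixed strategy $\mathbf{y}$ of the column player that assigns probability $p$ to column $m$, the row player's regret against $\mathbf{y}$ is at least $p-K/\sqrt n$, i.e. $\max_i \mathbf{e}_i^T M_n\mathbf{y}-\mathbf{x}^T M_n\mathbf{y}\ge p-K/\sqrt{n}$.
   Context: Mixed strategies are probability vectors over rows (for the row player) and columns (for the column player); the row player's payoff under $(\mathbf{x},\mathbf{y})$ is $\mathbf{x}^T M\mathbf{y}$ for his payoff matrix $M$. The regret of the row player is the difference between the payoff of his best response to $\mathbf{y}$ and his actual payoff $\mathbf{x}^TM\mathbf{y}$. *)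

(* Defs.v *)
From HB Require Import structures.
From mathcomp Require Import all_boot all_order all_algebra.
From Stdlib Require Import Rdefinitions.
From mathcomp Require Import Rstruct.
Set Implicit Arguments. Unset Strict Implicit. Unset Printing Implicit Defensive.
Import Order.TTheory GRing.Theory Num.Theory.
Local Open Scope ring_scope.

Definition ksqrt (n : nat) : nat := Nat.sqrt n.

(* Row index set of M_n: subsets of {0..n-1} of size k, i.e. 0/1 vectors with
   exactly k ones (each distinct vector appears exactly once). *)
Definition rowidx (n k : nat) := {S : {set 'I_n} | #|S| == k}.

Definition Mn (n : nat) (S : rowidx n (ksqrt n)) (j : 'I_n) : R :=
  if j \in val S then 1 else 0.

Definition mixed (T : finType) (x : T -> R) : Prop :=
  (forall t, 0 <= x t) /\ \sum_(t : T) x t = 1.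

Definition payoff (n : nat) (x : rowidx n (ksqrt n) -> R) (y : 'I_n -> R) : R :=
  \sum_(S : rowidx n (ksqrt n)) \sum_(j < n) x S * Mn S j * y j.

Definition rowpay (n : nat) (S : rowidx n (ksqrt n)) (y : 'I_n -> R) : R :=
  \sum_(j < n) Mn S j * y j.

(* Regret of row player: max_i e_i^T M y - x^T M y.  The row set is nonempty
   (k <= n) for n >= 1; \max over an empty set would be 0. *)
Definition regret (n : nat) (x : rowidx n (ksqrt n) -> R) (y : 'I_n -> R) : R :=
  \big[Num.max/0]_(S : rowidx n (ksqrt n)) rowpay S y - payoff x y.

(* Main.v *)
Require Import Defs.
From HB Require Import structures.
From mathcomp Require Import all_boot all_order all_algebra.
From Stdlib Require Import Rdefinitions.
From mathcomp Require Import Rstruct.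
From mathcomp Require Import lra zify.
From Stdlib Require Import Arith.
Import Order.TTheory GRing.Theory Num.Theory.
Local Open Scope ring_scope.

Lemma ksqrt_facts (n : nat) : (1 <= n)%nat ->
  [/\ (1 <= ksqrt n)%nat, (ksqrt n * ksqrt n <= n)%nat & (n < (ksqrt n).+1 * (ksqrt n).+1)%nat].
Proof.
move=> hn; rewrite /ksqrt; split.
- apply/ssrnat.leP; apply Nat.sqrt_le_square; lia.
- apply/ssrnat.leP; apply Nat.sqrt_le_square; lia.
- apply/ssrnat.ltP; apply Nat.sqrt_lt_square; lia.
Qed.

Lemma rowpayE n (S : rowidx n (ksqrt n)) (y : 'I_n -> R) :
  rowpay S y = \sum_(i in val S) y i.
Proof.
rewrite /rowpay [RHS]big_mkcond; apply: eq_bigr => i _.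
by rewrite /Mn; case: ifP => _; rewrite ?mul1r ?mul0r.
Qed.

Lemma sumMn n (S : rowidx n (ksqrt n)) : \sum_j Mn S j = (ksqrt n)%:R.
Proof.
rewrite /Mn -big_mkcond /= sumr_const.
by rewrite (eqP (valP S)).
Qed.

Theorem lemma1 :
  exists K : R, 0 < K /\
  forall n : nat, is_true (leq 1 n) ->
  forall x : rowidx n (ksqrt n) -> R, mixed x ->
  exists m : 'I_n,
  forall (p : R), 0 <= p <= 1 ->
  forall y : 'I_n -> R, mixed y -> y m = p ->
    p - K / Num.sqrt (n%:R) <= regret x y.
Proof.
exists 3; split; first lra.
move=> n hn x [x0 x1].
have [k1 kk kn] := ksqrt_facts n hn.
set k := ksqrt n in k1 kk kn x x0 x1 *.
pose q j := \sum_S x S * Mn S j.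
have sumq : \sum_j q j = k%:R.
  rewrite /q exchange_big /=.
  rewrite (eq_bigr (fun S => x S * k%:R)); last first.
    by move=> S _; rewrite -mulr_sumr sumMn.
  by rewrite -mulr_suml x1 mul1r.
pose j0 : 'I_n := Ordinal hn.
pose m := [arg min_(j < j0) q j]%O.
have qmin : forall j, q m <= q j.
  move=> j; rewrite /m; case: arg_minP => // i _ H; exact: H.
have qm : n%:R * q m <= k%:R.
  have -> : n%:R * q m = \sum_(j < n) q m by rewrite sumr_const card_ord mulr_natl.
  rewrite -sumq; apply: ler_sum => j _; exact: qmin.
exists m => p /andP [p0 p1] y [y0 y1] ym.
set M := \big[Num.max/0]_(S : rowidx n k) rowpay S y.
have kpos : 0 < (k%:R : R) by rewrite ltr0n.
have perS : forall U : rowidx n k, p - k%:R^-1 - Mn U m <= M - rowpay U y.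
  move=> U.
  have MS : rowpay U y <= M by apply: le_bigmax.
  have kinv : 0 <= (k%:R : R)^-1 by rewrite invr_ge0 ltW.
  rewrite /Mn; case: ifP => mS.
    lra.
  have : (leq 1 #|val U|) by rewrite (eqP (valP U)).
  case/card_gt0P => j1 j1S.
  pose j := [arg min_(i < j1 in val U) y i]%O.
  have [jS jmin] : j \in val U /\ forall i, i \in val U -> y j <= y i.
    rewrite /j; case: arg_minP => // i iS H; split => //.
  have rp1 : rowpay U y <= 1.
    rewrite -y1 /rowpay; apply: ler_sum => i _; rewrite /Mn; case: ifP => _.
      by rewrite mul1r.
    by rewrite mul0r.
  have kyj : k%:R * y j <= rowpay U y.
    have -> : k%:R * y j = \sum_(i in val U) y j by rewrite sumr_const (eqP (valP U)) mulr_natl.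
    rewrite rowpayE; apply: ler_sum => i iS; exact: jmin.
  have yjk : y j <= k%:R^-1.
    have -> : y j = k%:R^-1 * (k%:R * y j) by rewrite mulrA mulVf ?mul1r // gt_eqF.
    rewrite -[X in _ <= X]mulr1; apply: ler_wpM2l => //; lra.
  have cardS' : #|m |: (val U :\ j)| == k.
    rewrite cardsU1 in_setD1 mS andbF /=.
    apply/eqP; apply: etrans (eqP (valP U)).
    by rewrite [in RHS](cardsD1 j) jS.
  pose S' : rowidx n k := exist (fun T : {set 'I_n} => is_true (#|T| == k)) _ cardS'.
  have MS' : rowpay S' y <= M by apply: le_bigmax.
  have e1 : rowpay S' y = p + \sum_(i in val U :\ j) y i.
    rewrite rowpayE /= big_setU1 /=; first by rewrite ym.
    by rewrite in_setD1 mS andbF.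
  have e2 : rowpay U y = y j + \sum_(i in val U :\ j) y i.
    by rewrite rowpayE (big_setD1 j jS).
  lra.
have pay : payoff x y = \sum_S x S * rowpay S y.
  rewrite /payoff /rowpay; apply: eq_bigr => T _.
  by rewrite mulr_sumr; apply: eq_bigr => i _; rewrite mulrA.
have reg : regret x y = \sum_S x S * (M - rowpay S y).
  rewrite /regret pay -/M; symmetry.
  rewrite (eq_bigr (fun T => x T * M - x T * rowpay T y)); last by move=> T _; rewrite mulrBr.
  by rewrite sumrB -mulr_suml x1 mul1r.
have lb : p - k%:R^-1 - q m <= regret x y.
  rewrite reg.
  have -> : p - k%:R^-1 - q m = \sum_S x S * (p - k%:R^-1 - Mn S m).
    rewrite /q; symmetry.
    rewrite (eq_bigr (fun T => x T * (p - k%:R^-1) - x T * Mn T m)); last by move=> T _; rewrite mulrBr.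
    by rewrite sumrB -mulr_suml x1 mul1r.
  apply: ler_sum => T _; apply: ler_wpM2l; [exact: x0 | exact: perS].
apply: le_trans lb.
set s := Num.sqrt (n%:R : R).
have npos : 0 < (n%:R : R) by rewrite ltr0n.
have s0 : 0 < s by rewrite sqrtr_gt0.
have ss : s * s = n%:R by rewrite -expr2 sqr_sqrtr // ltW.
have kkR : (k%:R : R) * k%:R <= n%:R by rewrite -natrM ler_nat.
have knR : (n%:R : R) <= 4 * (k%:R * k%:R).
  have h : leq n (4 * (k * k))%N by nia.
  by rewrite -natrM -[4]/(4%:R) -natrM ler_nat.
have k1R : 1 <= (k%:R : R) by rewrite ler1n.
have ks : (k%:R : R) <= s by nra.
have sk : s <= 2 * k%:R by nra.
have i1 : (k%:R : R)^-1 <= 2 / s.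
  rewrite ler_pdivlMr // mulrC -ler_pdivlMr //; last by rewrite invr_gt0.
  by rewrite invrK.
have i2 : q m <= 1 / s.
  rewrite ler_pdivlMr //.
  have h : (q m * s) * s <= 1 * s.
    rewrite mul1r -mulrA ss mulrC; exact: le_trans qm ks.
  by rewrite ler_pM2r in h.
have e3 : 3 / s = 2 / s + 1 / s by rewrite -mulrDl; congr (_ * _); lra.
by rewrite e3 opprD addrA; apply: lerB => //; apply: lerB.
Qed.
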